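(* Let $\nu\in(-1,-1/2)$ and $\gamma_\nu=-1/2-\nu$. Then there exist constants $C,c>0$ such that for all $t>0$ and $x,y>0$, $$p_t^\nu(x,y)\le C\Big[\frac{1}{\sqrt t}\exp\Big(-\frac{|x-y|^2}{ct}\Big)+\frac1x\Big(\frac xy\Big)^{\gamma_\nu}\chi_{\{y<x/2\}}+\frac1y\Big(\frac yx\Big)^{\gamma_\nu}\chi_{\{x/2\le y\}}\Big].$$
   Context: For $\nu>-1$, $p_t^\nu(x,y)$ denotes the integral kernel of the heat semigroup $e^{-t\mathcal L_\nu}$ of the one-dimensional Laguerre operator $\mathcal L_\nu$ on $(0,\infty)$ (eigenfunctions the Laguerre functions $\varphi_k^\nu$, eigenvalues $4k+2\nu+2$). Explicitly, with $r=e^{-4t}$, $p_t^\nu(x,y)=\frac{2(rxy)^{1/2}}{1-r}\exp\big(-\frac12\frac{1+r}{1-r}(x^2+y^2)\big)I_\nu\big(\frac{2r^{1/2}}{1-r}xy\big)$, where $I_\nu$ is the modified Bessel function of the first kind. $\chi_E$ is the indicator function of $E$. *)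

(* Defs.v *)
From Stdlib Require Import Reals.
From Coquelicot Require Import Coquelicot.
Open Scope R_scope.

Definition Gamma (s : R) : R :=
  RInt_gen (fun u => Rpower u (s - 1) * exp (- u)) (at_right 0) (Rbar_locally p_infty).

Definition BesselI (nu z : R) : R :=
  Series (fun k : nat =>
    Rpower (z / 2) (2 * INR k + nu) / (INR (Factorial.fact k) * Gamma (INR k + nu + 1))).

Definition laguerre_heat_kernel (nu t x y : R) : R :=
  let r := exp (-4 * t) in
  2 * sqrt (r * x * y) / (1 - r)
    * exp (- (1/2) * ((1 + r) / (1 - r)) * (x ^ 2 + y ^ 2))
    * BesselI nu (2 * sqrt r / (1 - r) * x * y).

Definition chi {P : Prop} (d : {P} + {~ P}) : R := if d then 1 else 0.

(* Main.v *)
Require Import Defs.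
From Stdlib Require Import Reals Lra Lia Factorial.
From Coquelicot Require Import Coquelicot.
Open Scope R_scope.

Lemma exp_psum x N : 0 <= x ->
  sum_f_R0 (fun i => / INR (fact i) * x ^ i) N <= exp x.
Proof.
  intros Hx.
  apply (growing_ineq (sum_f_R0 (fun i => / INR (fact i) * x ^ i))).
  - intro n. rewrite tech5. assert (0 <= / INR (fact (S n)) * x ^ S n).
    { apply Rmult_le_pos. left; apply Rinv_0_lt_compat, INR_fact_lt_0. apply pow_le; auto. }
    lra.
  - unfold exp. destruct (exist_exp x) as [l Hl]. simpl. exact Hl.
Qed.

Lemma psum_nonneg (f : nat -> R) N : (forall i, 0 <= f i) -> 0 <= sum_f_R0 f N.
Proof. intros H; induction N; simpl; [apply H|]. specialize (H (S N)); lra. Qed.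

Lemma exp_term x n : 0 <= x -> x ^ n / INR (fact n) <= exp x.
Proof.
  intros Hx. eapply Rle_trans; [|apply (exp_psum x n Hx)].
  destruct n.
  - simpl. lra.
  - rewrite tech5.
    assert (0 <= sum_f_R0 (fun i => / INR (fact i) * x ^ i) n).
    { apply psum_nonneg. intro i. apply Rmult_le_pos. left; apply Rinv_0_lt_compat, INR_fact_lt_0. apply pow_le; auto. }
    replace (x ^ S n / INR (fact (S n))) with (/ INR (fact (S n)) * x ^ S n) by (unfold Rdiv; ring). lra.
Qed.

Lemma is_derive_Rpower u e : 0 < u -> is_derive (fun v => Rpower v e) u (e * Rpower u (e - 1)).
Proof. intros Hu. apply is_derive_Reals. apply derivable_pt_lim_power; auto. Qed.

Lemma cont_Rpower u e : 0 < u -> continuous (fun v => Rpower v e) u.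
Proof. intros Hu. apply (ex_derive_continuous (K:=R_AbsRing) (V:=R_NormedModule) (fun v => Rpower v e)). eexists. apply is_derive_Rpower; auto. Qed.

Definition gf (s u : R) := Rpower u (s - 1) * exp (- u).

Lemma cont_gf s u : 0 < u -> continuous (gf s) u.
Proof.
  intros Hu. unfold gf. apply (continuous_mult (fun v => Rpower v (s-1)) (fun v => exp (- v))).
  apply cont_Rpower; auto.
  apply (ex_derive_continuous (K:=R_AbsRing) (V:=R_NormedModule) (fun v => exp (- v))). auto_derive. auto.
Qed.

Lemma gf_pos s u : 0 < u -> 0 < gf s u.
Proof. intros. unfold gf, Rpower. apply Rmult_lt_0_compat; apply exp_pos. Qed.

From Stdlib Require Import Classical.

Section GS.
Variable f : R -> R.
Hypothesis fc : forall u, 0 < u -> continuous f u.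
Hypothesis fp : forall u, 0 < u -> 0 <= f u.

Lemma exR a b : 0 < a -> a <= b -> ex_RInt f a b.
Proof.
  intros Ha Hab. apply (ex_RInt_continuous (V:=R_CompleteNormedModule)). intros z Hz.
  rewrite Rmin_left in Hz by lra. apply fc. lra.
Qed.

Lemma RInt_nn a b : 0 < a -> a <= b -> 0 <= RInt f a b.
Proof. intros. apply RInt_ge_0; auto. apply exR; auto. intros; apply fp; lra. Qed.

Lemma RInt_mono a' a b b' : 0 < a' -> a' <= a -> a <= b -> b <= b' ->
  RInt f a b <= RInt f a' b'.
Proof.
  intros. rewrite <- (RInt_Chasles (V:=R_CompleteNormedModule) f a' a b') by (apply exR; lra).
  rewrite <- (RInt_Chasles (V:=R_CompleteNormedModule) f a b b') by (apply exR; lra).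
  pose proof (RInt_nn a' a). pose proof (RInt_nn b b').
  change plus with Rplus. assert (0 <= RInt f a' a) by (apply RInt_nn; lra).
  assert (0 <= RInt f b b') by (apply RInt_nn; lra). lra.
Qed.

Lemma gen_sup B :
  (forall a b, 0 < a -> a <= b -> RInt f a b <= B) ->
  exists l, is_RInt_gen f (at_right 0) (Rbar_locally p_infty) l /\
   (forall a b, 0 < a -> a <= b -> RInt f a b <= l) /\
   (forall M, (forall a b, 0 < a -> a <= b -> RInt f a b <= M) -> l <= M).
Proof.
  intros HB.
  set (E := fun v => exists a b, 0 < a /\ a <= b /\ v = RInt f a b).
  assert (Hb : bound E).
  { exists B. intros v [a [b [Ha [Hab ->]]]]. apply HB; auto. }
  assert (Hne : exists v, E v).
  { exists (RInt f 1 1). exists 1, 1. repeat split; lra. }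
  destruct (completeness E Hb Hne) as [l [Hub Hlub]].
  assert (H2 : forall a b, 0 < a -> a <= b -> RInt f a b <= l).
  { intros a b Ha Hab. apply Hub. exists a, b. auto. }
  exists l. split; [|split; auto].
  2:{ intros M HM. apply Hlub. intros v [a [b [Ha [Hab ->]]]]. apply HM; auto. }
  intros P [eps Heps]. simpl.
  assert (Hex : exists a0 b0, 0 < a0 /\ a0 <= b0 /\ l - eps < RInt f a0 b0).
  { apply NNPP. intro Hn.
    assert (l <= l - eps).
    { apply Hlub. intros v [a [b [Ha [Hab ->]]]].
      apply Rnot_lt_le. intro Hc. apply Hn. exists a, b. auto. }
    destruct eps; simpl in *; lra. }
  destruct Hex as [a0 [b0 [Ha0 [Hab0 Hlt]]]].
  apply (Filter_prod _ _ _ (fun a => 0 < a < a0) (fun b => b0 < b)).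
  - exists (mkposreal a0 Ha0). intros y Hy Hy0. simpl.
    unfold ball in Hy; simpl in Hy; unfold AbsRing_ball in Hy. simpl in Hy.
    unfold abs, minus, plus, opp in Hy; simpl in Hy.
    apply Rabs_lt_between in Hy. lra.
  - exists b0. auto.
  - intros a b Ha Hb'. simpl in *. exists (RInt f a b). split.
    + apply (RInt_correct (V:=R_CompleteNormedModule)). apply exR; lra.
    + apply Heps. unfold ball; simpl; unfold AbsRing_ball, abs, minus, plus, opp; simpl.
      assert (RInt f a0 b0 <= RInt f a b) by (apply RInt_mono; lra).
      assert (RInt f a b <= l) by (apply H2; lra).
      apply Rabs_lt_between. destruct eps; simpl in *; lra.
Qed.
End GS.

Lemma Rpower_1_l e : Rpower 1 e = 1.
Proof. unfold Rpower. rewrite ln_1, Rmult_0_r. apply exp_0. Qed.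

Lemma Rpower_pos x e : 0 < Rpower x e.
Proof. apply exp_pos. Qed.

Lemma RInt_Rpow a b s : 0 < a -> a <= b -> 0 < s ->
  RInt (fun u => Rpower u (s - 1)) a b = (Rpower b s - Rpower a s) / s.
Proof.
  intros Ha Hab Hs.
  apply (is_RInt_unique (V:=R_CompleteNormedModule)).
  replace ((Rpower b s - Rpower a s) / s) with (minus (Rpower b s / s) (Rpower a s / s))
    by (unfold minus, plus, opp; simpl; field; lra).
  apply (is_RInt_derive (V:=R_CompleteNormedModule) (fun u => Rpower u s / s)).
  - intros x Hx. rewrite Rmin_left in Hx by lra.
    replace (Rpower x (s - 1)) with (/s * (s * Rpower x (s - 1))) by (field; lra).
    apply (is_derive_ext (fun u => /s * Rpower u s)). intro t; unfold Rdiv; apply Rmult_comm.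
    apply is_derive_scal. apply is_derive_Rpower; lra.
  - intros x Hx. rewrite Rmin_left in Hx by lra. apply cont_Rpower; lra.
Qed.

Lemma RInt_expm a b M : RInt (fun u => M * exp (- u / 2)) a b
   = (-2 * M * exp (- b / 2)) - (-2 * M * exp (- a / 2)).
Proof.
  apply (is_RInt_unique (V:=R_CompleteNormedModule)).
  apply (is_RInt_derive (V:=R_CompleteNormedModule) (fun u => -2 * M * exp (- u / 2))).
  - intros x Hx. auto_derive; auto. replace (- x * / 2) with (- x / 2) by reflexivity. set (e := exp (- x / 2)). field.
  - intros x Hx. apply (ex_derive_continuous (K:=R_AbsRing) (V:=R_NormedModule) (fun u => M * exp (- u / 2))). auto_derive. auto.
Qed.

Lemma gf_le_pow s u : 0 < u -> gf s u <= Rpower u (s - 1) * exp (-u).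
Proof. unfold gf; lra. Qed.

Lemma gf_bound s : 0 < s -> exists B, forall a b, 0 < a -> a <= b -> RInt (gf s) a b <= B.
Proof.
  intros Hs.
  destruct (INR_unbounded s) as [n Hn].
  set (M := 2 ^ n * INR (fact n)).
  assert (HM0 : 0 < M) by (apply Rmult_lt_0_compat; [apply pow_lt; lra| apply INR_fact_lt_0]).
  assert (Hbig : forall u, 1 <= u -> gf s u <= M * exp (- u / 2)).
  { intros u Hu. unfold gf.
    assert (H1 : Rpower u (s - 1) <= u ^ n).
    { rewrite <- Rpower_pow by lra. apply Rle_Rpower; lra. }
    assert (H2 : (u / 2) ^ n / INR (fact n) <= exp (u / 2)) by (apply exp_term; lra).
    assert (H3 : u ^ n = 2 ^ n * (u / 2) ^ n).
    { rewrite <- Rpow_mult_distr. f_equal. field. }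
    assert (H4 : u ^ n <= M * exp (u / 2)).
    { rewrite H3. unfold M. pose proof (INR_fact_lt_0 n).
      apply (Rmult_le_compat_r (INR (fact n))) in H2; [|lra].
      unfold Rdiv in H2. rewrite Rmult_assoc, Rinv_l, Rmult_1_r in H2 by lra.
      rewrite Rmult_assoc. apply Rmult_le_compat_l. apply pow_le; lra. lra. }
    pose proof (exp_pos (- u)).
    apply Rle_trans with (u ^ n * exp (- u)).
    { apply Rmult_le_compat_r; lra. }
    apply Rle_trans with (M * exp (u / 2) * exp (- u)).
    { apply Rmult_le_compat_r; lra. }
    rewrite Rmult_assoc, <- exp_plus. right. f_equal. f_equal. field. }
  exists (1 / s + 2 * M).
  intros a b Ha Hab.
  assert (Hc := cont_gf s).
  assert (Hp : forall u, 0 < u -> 0 <= gf s u) by (intros; left; apply gf_pos; auto).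
  apply Rle_trans with (RInt (gf s) (Rmin a 1) (Rmax b 1)).
  { apply RInt_mono; auto. apply Rmin_glb_lt; lra. apply Rmin_l. apply Rmax_l. }
  assert (Ha' : 0 < Rmin a 1) by (apply Rmin_glb_lt; lra).
  assert (Ha1 : Rmin a 1 <= 1) by apply Rmin_r.
  assert (Hb1 : 1 <= Rmax b 1) by apply Rmax_r.
  rewrite <- (RInt_Chasles (V:=R_CompleteNormedModule) (gf s) (Rmin a 1) 1 (Rmax b 1))
    by (apply exR; auto; lra).
  change plus with Rplus.
  assert (HA : RInt (gf s) (Rmin a 1) 1 <= 1 / s).
  { apply Rle_trans with (RInt (fun u => Rpower u (s - 1)) (Rmin a 1) 1).
    - apply RInt_le; auto. apply exR; auto.
      apply (ex_RInt_continuous (V:=R_CompleteNormedModule)). intros z Hz.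
      rewrite Rmin_left in Hz by lra. apply cont_Rpower. lra.
      intros x Hx. unfold gf. pose proof (Rpower_pos x (s-1)).
      assert (exp (- x) <= 1) by (rewrite <- exp_0; apply exp_le_3 || (left; apply exp_increasing; lra)).
      apply Rle_trans with (Rpower x (s - 1) * 1); [apply Rmult_le_compat_l; lra| lra].
    - rewrite RInt_Rpow by lra. rewrite Rpower_1_l. pose proof (Rpower_pos (Rmin a 1) s).
      unfold Rdiv. apply Rmult_le_compat_r. left; apply Rinv_0_lt_compat; lra. lra. }
  assert (HB : RInt (gf s) 1 (Rmax b 1) <= 2 * M).
  { apply Rle_trans with (RInt (fun u => M * exp (- u / 2)) 1 (Rmax b 1)).
    - apply RInt_le; auto. apply exR; auto; lra.
      apply (ex_RInt_continuous (V:=R_CompleteNormedModule)). intros z Hz.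
      apply (ex_derive_continuous (K:=R_AbsRing) (V:=R_NormedModule) (fun u => M * exp (- u / 2))). auto_derive. auto.
      intros x Hx. apply Hbig. lra.
    - rewrite RInt_expm. pose proof (exp_pos (- Rmax b 1 / 2)).
      assert (exp (- 1 / 2) <= 1) by (rewrite <- exp_0; left; apply exp_increasing; lra).
      replace (- (1) / 2) with (-1 / 2) by field. nra. }
  lra.
Qed.

Lemma Gamma_char s : 0 < s ->
  (forall a b, 0 < a -> a <= b -> RInt (gf s) a b <= Gamma s) /\
  (forall M, (forall a b, 0 < a -> a <= b -> RInt (gf s) a b <= M) -> Gamma s <= M).
Proof.
  intros Hs. destruct (gf_bound s Hs) as [B HB].
  destruct (gen_sup (gf s) (cont_gf s) (fun u Hu => Rlt_le _ _ (gf_pos s u Hu)) B HB)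
    as [l [Hl [H1 H2]]].
  assert (E : Gamma s = l).
  { unfold Gamma. apply (is_RInt_gen_unique (V:=R_CompleteNormedModule)
     (Fa := at_right 0) (Fb := Rbar_locally p_infty)
     (FFa := Proper_StrongProper _ (at_right_proper_filter 0))
     (FFb := Proper_StrongProper _ (Rbar_locally_filter p_infty))).
    exact Hl. }
  rewrite E. auto.
Qed.

Lemma exp_mono x y : x <= y -> exp x <= exp y.
Proof. intros [H|H]; [left; apply exp_increasing; auto| subst; lra]. Qed.

Lemma Rpower_le_neg M u e : 0 < M -> M <= u -> e <= 0 -> Rpower u e <= Rpower M e.
Proof.
  intros HM Hu He. unfold Rpower. apply exp_mono.
  assert (ln M <= ln u) by (apply ln_le; lra). nra.
Qed.

Lemma Rpower_split u M g : 0 < u -> 0 < M -> 0 <= g <= 1 ->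
  Rpower u g <= Rpower M g + u * Rpower M (g - 1).
Proof.
  intros Hu HM Hg. pose proof (Rpower_pos M g). pose proof (Rpower_pos M (g - 1)).
  destruct (Rle_lt_dec u M) as [Hc|Hc].
  - assert (Rpower u g <= Rpower M g) by (apply Rle_Rpower_l; lra). nra.
  - replace (Rpower u g) with (u * Rpower u (g - 1)).
    + assert (Rpower u (g - 1) <= Rpower M (g - 1)) by (apply Rpower_le_neg; lra). nra.
    + replace g with (1 + (g - 1)) at 2 by ring. rewrite Rpower_plus, Rpower_1; auto.
Qed.

Lemma Gamma_ge s a b : 0 < s -> 0 < a -> a <= b -> RInt (gf s) a b <= Gamma s.
Proof. intros Hs. apply (proj1 (Gamma_char s Hs)). Qed.

Lemma Gamma_least s M : 0 < s -> (forall a b, 0 < a -> a <= b -> RInt (gf s) a b <= M) -> Gamma s <= M.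
Proof. intros Hs. apply (proj2 (Gamma_char s Hs)). Qed.

Lemma exRg s a b : 0 < a -> a <= b -> ex_RInt (gf s) a b.
Proof. intros. apply exR; auto; intros; try apply cont_gf; try (left; apply gf_pos); auto. Qed.

Lemma Gamma_pos s : 0 < s -> 0 < Gamma s.
Proof.
  intros Hs. apply Rlt_le_trans with (RInt (gf s) 1 2).
  - apply RInt_gt_0; try lra; intros; [apply gf_pos| apply cont_gf]; lra.
  - apply Gamma_ge; lra.
Qed.

Lemma Gamma_cmp s1 s2 s3 al be : 0 < s1 -> 0 < s2 -> 0 < s3 -> 0 <= al -> 0 <= be ->
  (forall u, 0 < u -> gf s1 u <= al * gf s2 u + be * gf s3 u) ->
  Gamma s1 <= al * Gamma s2 + be * Gamma s3.
Proof.
  intros H1 H2 H3 Hal Hbe Hpt. apply Gamma_least; auto. intros a b Ha Hab.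
  assert (E2 := exRg s2 a b Ha Hab). assert (E3 := exRg s3 a b Ha Hab).
  apply Rle_trans with (RInt (fun u => plus (scal al (gf s2 u)) (scal be (gf s3 u))) a b).
  - apply RInt_le; auto. apply exRg; auto.
    apply (ex_RInt_plus (V:=R_NormedModule)); apply (ex_RInt_scal (V:=R_NormedModule)); auto.
    intros x Hx. apply Hpt. lra.
  - rewrite (RInt_plus (V:=R_CompleteNormedModule)).
    2,3: apply (ex_RInt_scal (V:=R_NormedModule)); auto.
    rewrite !(RInt_scal (V:=R_CompleteNormedModule)) by auto.
    change plus with Rplus. change scal with Rmult. simpl.
    assert (RInt (gf s2) a b <= Gamma s2) by (apply Gamma_ge; auto).
    assert (RInt (gf s3) a b <= Gamma s3) by (apply Gamma_ge; auto).
    unfold mult; simpl. nra.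
Qed.

Lemma gf_succ s u : gf (s + 1) u = Rpower u s * exp (- u).
Proof. unfold gf. replace (s + 1 - 1) with s by ring. reflexivity. Qed.

Lemma RInt_rec s a b : 0 < a -> a <= b ->
  RInt (gf (s + 1)) a b = Rpower a s * exp (- a) - Rpower b s * exp (- b) + s * RInt (gf s) a b.
Proof.
  intros Ha Hab.
  set (F := fun u => Rpower u s * (- exp (- u))).
  assert (HI : is_RInt (fun u => gf (s + 1) u - s * gf s u) a b (minus (F b) (F a))).
  { apply (is_RInt_derive (V:=R_CompleteNormedModule) F).
    - intros x Hx. rewrite Rmin_left in Hx by lra.
      assert (D1 := is_derive_Rpower x s ltac:(lra)).
      assert (D2 : is_derive (fun u => - exp (- u)) x (exp (- x))).
      { auto_derive; auto. ring. }
      pose proof (is_derive_mult _ _ _ _ _ D1 D2 (fun n m => Rmult_comm n m)) as D.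
      replace (gf (s + 1) x - s * gf s x) with (plus (mult (s * Rpower x (s-1)) (- exp (-x))) (mult (Rpower x s) (exp (-x)))).
      exact D.
      unfold plus, mult; simpl. rewrite gf_succ. unfold gf. ring.
    - intros x Hx. rewrite Rmin_left in Hx by lra.
      apply (continuous_minus (V:=R_NormedModule) (gf (s + 1)) (fun u => s * gf s u)).
      apply cont_gf; lra.
      apply (continuous_scal_r (V:=R_NormedModule) s (gf s)). apply cont_gf; lra. }
  assert (HJ := is_RInt_scal (V:=R_NormedModule) (gf s) a b s _ (RInt_correct (V:=R_CompleteNormedModule) _ _ _ (exRg s a b Ha Hab))).
  pose proof (is_RInt_plus (V:=R_NormedModule) _ _ _ _ _ _ HI HJ) as HK.
  apply (is_RInt_ext (V:=R_NormedModule) _ (gf (s + 1))) in HK.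
  - apply (is_RInt_unique (V:=R_CompleteNormedModule)) in HK. rewrite HK.
    unfold F, minus, plus, opp, scal; simpl. unfold mult; simpl. ring.
  - intros x _. unfold plus, scal; simpl; unfold mult; simpl. ring.
Qed.

Lemma pow_exp_small s e b : 0 < s -> 0 < e ->
  exists b', b <= b' /\ 1 <= b' /\ Rpower b' s * exp (- b') <= e.
Proof.
  intros Hs He. destruct (INR_unbounded s) as [n Hn].
  set (F := INR (fact (S n))). assert (HF : 0 < F) by apply INR_fact_lt_0.
  set (b' := Rmax b (Rmax 1 (F / e))).
  assert (Hb1 : 1 <= b') by (unfold b'; eapply Rle_trans; [|apply Rmax_r]; apply Rmax_l).
  assert (Hb2 : F / e <= b') by (unfold b'; eapply Rle_trans; [|apply Rmax_r]; apply Rmax_r).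
  exists b'. split; [apply Rmax_l|]. split; auto.
  assert (H1 : Rpower b' s <= b' ^ n).
  { rewrite <- Rpower_pow by lra. apply Rle_Rpower; lra. }
  assert (H2 : b' ^ S n / F <= exp b') by (apply exp_term; lra).
  pose proof (exp_pos (- b')). pose proof (exp_pos b').
  assert (H3 : exp b' * exp (- b') = 1) by (rewrite <- exp_plus; replace (b' + - b') with 0 by ring; apply exp_0).
  assert (H4 : b' ^ n * exp (- b') <= F / b').
  { apply (Rmult_le_reg_l b'). lra.
    replace (b' * (b' ^ n * exp (- b'))) with (b' ^ S n * exp (- b')) by (simpl; ring).
    replace (b' * (F / b')) with F by (field; lra).
    apply (Rmult_le_compat_r (exp (- b'))) in H2; [|lra].
    apply (Rmult_le_compat_r F) in H2; [|lra].
    replace (b' ^ S n / F * exp (- b') * F) with (b' ^ S n * exp (- b')) in H2 by (field; lra).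
    rewrite H3 in H2. lra. }
  assert (H5 : F / b' <= e).
  { apply (Rmult_le_reg_l b'). lra. replace (b' * (F / b')) with F by (field; lra).
    apply (Rmult_le_compat_r e) in Hb2; [|lra].
    replace (F / e * e) with F in Hb2 by (field; lra). lra. }
  apply Rle_trans with (b' ^ n * exp (- b')); [apply Rmult_le_compat_r; lra|]. lra.
Qed.

Lemma Rpower_small s e a : 0 < s -> 0 < e -> 0 < a ->
  exists a', 0 < a' /\ a' <= a /\ Rpower a' s <= e.
Proof.
  intros Hs He Ha. exists (Rmin a (Rpower e (/ s))).
  split; [apply Rmin_glb_lt; auto; apply Rpower_pos|]. split; [apply Rmin_l|].
  apply Rle_trans with (Rpower (Rpower e (/ s)) s).
  - apply Rle_Rpower_l. lra. split. apply Rmin_glb_lt; auto; apply Rpower_pos. apply Rmin_r.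
  - rewrite Rpower_mult. rewrite Rinv_l by lra. rewrite Rpower_1; lra.
Qed.

Lemma Gamma_rec s : 0 < s -> Gamma (s + 1) = s * Gamma s.
Proof.
  intros Hs. apply Rle_antisym.
  - apply Gamma_least. lra. intros a b Ha Hab.
    apply Rle_plus_epsilon. intros e He.
    destruct (Rpower_small s e a Hs He Ha) as [a' [Ha' [Ha'a Hpa]]].
    apply Rle_trans with (RInt (gf (s + 1)) a' b).
    + apply RInt_mono; auto; try lra. apply cont_gf. intros; left; apply gf_pos; auto.
    + rewrite RInt_rec by lra.
      assert (RInt (gf s) a' b <= Gamma s) by (apply Gamma_ge; lra).
      pose proof (exp_pos (- a')). pose proof (exp_pos (- b)). pose proof (Rpower_pos b s).
      assert (exp (- a') <= 1) by (rewrite <- exp_0; apply exp_mono; lra).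
      pose proof (Rpower_pos a' s).
      assert (Rpower a' s * exp (- a') <= e) by nra.
      assert (0 <= Rpower b s * exp (- b)) by nra. nra.
  - assert (Hg : Gamma s <= Gamma (s + 1) / s).
    { apply Gamma_least; auto. intros a b Ha Hab.
      apply Rle_plus_epsilon. intros e He.
      destruct (pow_exp_small s (s * e) b Hs ltac:(nra)) as [b' [Hbb [Hb1 Hpb]]].
      apply Rle_trans with (RInt (gf s) a b').
      + apply RInt_mono; auto; try lra. apply cont_gf. intros; left; apply gf_pos; auto.
      + assert (E := RInt_rec s a b' Ha ltac:(lra)).
        assert (RInt (gf (s + 1)) a b' <= Gamma (s + 1)) by (apply Gamma_ge; lra).
        pose proof (exp_pos (- a)). pose proof (Rpower_pos a s).
        assert (0 <= Rpower a s * exp (- a)) by nra.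
        apply (Rmult_le_reg_l s); auto.
        replace (s * (Gamma (s + 1) / s + e)) with (Gamma (s + 1) + s * e) by (field; lra).
        lra. }
    apply (Rmult_le_compat_l s) in Hg; [|lra].
    replace (s * (Gamma (s + 1) / s)) with (Gamma (s + 1)) in Hg by (field; lra). lra.
Qed.

Lemma Gamma_split s g : 0 < s -> 0 <= g <= 1 ->
  Gamma (s + g) <= 2 * Rpower s g * Gamma s.
Proof.
  intros Hs Hg.
  assert (H := Gamma_cmp (s + g) s (s + 1) (Rpower s g) (Rpower s (g - 1))
    ltac:(lra) Hs ltac:(lra) (Rlt_le _ _ (Rpower_pos _ _)) (Rlt_le _ _ (Rpower_pos _ _))).
  rewrite Gamma_rec in H by auto.
  replace (Rpower s (g - 1) * (s * Gamma s)) with (Rpower s g * Gamma s) in H.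
  - replace (2 * Rpower s g * Gamma s) with (Rpower s g * Gamma s + Rpower s g * Gamma s) by ring.
    apply H. intros u Hu. rewrite gf_succ. unfold gf.
    replace (s + g - 1) with (g + (s - 1)) by ring. rewrite Rpower_plus, Rmult_assoc.
    replace (Rpower s g * (Rpower u (s - 1) * exp (- u)) + Rpower s (g - 1) * (Rpower u s * exp (- u)))
      with ((Rpower s g + u * Rpower s (g - 1)) * (Rpower u (s - 1) * exp (- u))).
    + apply Rmult_le_compat_r. pose proof (Rpower_pos u (s-1)); pose proof (exp_pos (-u)); nra.
      apply Rpower_split; auto.
    + replace (Rpower u s) with (u * Rpower u (s - 1)). ring.
      replace s with (1 + (s - 1)) at 2 by ring. rewrite Rpower_plus, Rpower_1; auto.
  - replace (Rpower s (g - 1) * (s * Gamma s)) with ((s * Rpower s (g - 1)) * Gamma s) by ring.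
    f_equal. replace g with (1 + (g - 1)) at 1 by ring. rewrite Rpower_plus, Rpower_1; auto.
Qed.

Lemma Gamma_half k : Gamma (INR k + 1/2) * 4 ^ k * INR (fact k) = Gamma (1/2) * INR (fact (2 * k)).
Proof.
  induction k.
  - simpl. ring_simplify. replace (0 + 1/2) with (1/2) by ring. ring.
  - rewrite S_INR. replace (INR k + 1 + 1/2) with ((INR k + 1/2) + 1) by ring.
    rewrite Gamma_rec by (pose proof (pos_INR k); lra).
    replace (2 * S k)%nat with (S (S (2 * k))) by lia.
    rewrite !fact_simpl. rewrite !mult_INR, !S_INR.
    rewrite mult_INR. replace (INR 2) with 2 by reflexivity. replace (Gamma (1 / 2) * ((2 * INR k + 1 + 1) * ((2 * INR k + 1) * INR (fact (2 * k))))) with ((2 * INR k + 1 + 1) * (2 * INR k + 1) * (Gamma (1/2) * INR (fact (2 * k)))) by (set (g := Gamma (1/2)); ring). rewrite <- IHk. simpl. set (g := Gamma (INR k + 1 / 2)). field.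
Qed.

Lemma even_series (a : nat -> R) Sb : (forall n, 0 <= a n) -> (forall N, sum_f_R0 a N <= Sb) ->
  ex_series (fun k => a (2 * k)%nat) /\ Series (fun k => a (2 * k)%nat) <= Sb.
Proof.
  intros Ha HS.
  assert (Hle : forall N, sum_f_R0 (fun k => a (2 * k)%nat) N <= sum_f_R0 a (2 * N)).
  { induction N. simpl. lra.
    replace (2 * S N)%nat with (S (S (2 * N))) by lia.
    rewrite tech5. rewrite (tech5 a (S (2 * N))), (tech5 a (2 * N)).
    replace (2 * S N)%nat with (S (S (2 * N))) by lia. pose proof (Ha (S (2 * N))). lra. }
  assert (Hg : Un_growing (sum_f_R0 (fun k => a (2 * k)%nat))).
  { intro n. rewrite tech5. pose proof (Ha (2 * S n)%nat). lra. }
  assert (Hb : has_ub (sum_f_R0 (fun k => a (2 * k)%nat))).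
  { exists Sb. intros x [n ->]. eapply Rle_trans; [apply Hle| apply HS]. }
  destruct (growing_cv _ Hg Hb) as [l Hl].
  assert (His : is_series (fun k => a (2 * k)%nat) l) by (apply is_series_Reals; exact Hl).
  split. exists l; auto.
  rewrite (is_series_unique _ _ His).
  apply (Rle_cv_lim (Un := sum_f_R0 (fun k => a (2 * k)%nat)) (Vn := fun _ => Sb)).
  - intro n. eapply Rle_trans; [apply Hle| apply HS].
  - exact Hl.
  - intros e He. exists 0%nat. intros. unfold R_dist. rewrite Rminus_diag, Rabs_R0. lra.
Qed.

Definition ee (z : R) (n : nat) := z ^ n / INR (fact n).

Lemma ee_nn z n : 0 <= z -> 0 <= ee z n.
Proof. intros. unfold ee. apply Rmult_le_pos. apply pow_le; auto. left; apply Rinv_0_lt_compat, INR_fact_lt_0. Qed.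

Lemma sum_ee z N : 0 <= z -> sum_f_R0 (ee z) N <= exp z.
Proof.
  intros Hz. eapply Rle_trans; [|apply (exp_psum z N Hz)]. right. apply sum_eq. intros. unfold ee, Rdiv. ring.
Qed.

Lemma sum_nee z N : sum_f_R0 (fun n => INR n * ee z n) (S N) = z * sum_f_R0 (ee z) N.
Proof.
  induction N.
  - simpl. unfold ee. simpl. field.
  - rewrite tech5, IHN, (tech5 (ee z)). unfold ee.
    set (f := sum_f_R0 _ N).
    rewrite (fact_simpl (S N)), mult_INR, (S_INR (S N)).
    replace (z ^ S (S N)) with (z * z ^ (S N)) by reflexivity.
    pose proof (INR_fact_lt_0 (S N)). pose proof (pos_INR (S N)).
    field. split; lra.
Qed.

Lemma sum_nee_le z N : 0 <= z -> sum_f_R0 (fun n => INR n * ee z n) N <= z * exp z.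
Proof.
  intros Hz. destruct N.
  - simpl. rewrite Rmult_0_l. pose proof (exp_pos z). nra.
  - rewrite sum_nee. apply Rmult_le_compat_l; auto. apply sum_ee; auto.
Qed.

Section Bessel.
Variable nu : R.
Hypothesis hnu1 : -1 < nu.
Hypothesis hnu2 : nu < -1/2.
Let gam := -1/2 - nu.

Lemma term_bound z k : 0 < z ->
  Rpower (z / 2) (2 * INR k + nu) / (INR (fact k) * Gamma (INR k + nu + 1))
  <= (2 / Gamma (1/2)) * Rpower (z / 2) nu * (ee z (2 * k) * Rpower (INR k + nu + 1) gam).
Proof.
  intros Hz. set (s := INR k + nu + 1).
  assert (Hs : 0 < s) by (unfold s; pose proof (pos_INR k); lra).
  assert (Hsp := Gamma_split s gam Hs ltac:(unfold gam; lra)).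
  replace (s + gam) with (INR k + 1/2) in Hsp by (unfold s, gam; field).
  assert (Hh := Gamma_half k).
  assert (Hg12 := Gamma_pos (1/2) ltac:(lra)).
  assert (Hgs := Gamma_pos s Hs).
  assert (Hgk := Gamma_pos (INR k + 1/2) ltac:(pose proof (pos_INR k); lra)).
  pose proof (INR_fact_lt_0 k) as Hfk. pose proof (INR_fact_lt_0 (2 * k)) as Hf2k.
  assert (H4 : 0 < 4 ^ k) by (apply pow_lt; lra).
  set (ps := Rpower s gam) in *. assert (Hps : 0 < ps) by apply Rpower_pos.
  set (D0 := Gamma (1/2) * INR (fact (2 * k)) / (4 ^ k * 2 * ps)).
  assert (HD0 : 0 < D0) by (unfold D0; apply Rmult_lt_0_compat; [nra| apply Rinv_0_lt_compat; nra]).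
  assert (HD : D0 <= INR (fact k) * Gamma s).
  { unfold D0. rewrite <- Hh.
    apply (Rmult_le_reg_r (4 ^ k * 2 * ps)). nra.
    replace (Gamma (INR k + 1 / 2) * 4 ^ k * INR (fact k) / (4 ^ k * 2 * ps) * (4 ^ k * 2 * ps))
      with (Gamma (INR k + 1 / 2) * 4 ^ k * INR (fact k)) by (field; lra).
    set (g1 := Gamma (INR k + 1 / 2)) in *. set (g2 := Gamma s) in *. replace (g1 * 4 ^ k * INR (fact k)) with (g1 * (4 ^ k * INR (fact k))) by ring. replace (INR (fact k) * g2 * (4 ^ k * 2 * ps)) with (2 * ps * g2 * (4 ^ k * INR (fact k))) by ring. apply Rmult_le_compat_r; nra. }
  assert (Hpz : Rpower (z / 2) (2 * INR k + nu) = Rpower (z / 2) nu * (z / 2) ^ (2 * k)).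
  { rewrite <- Rpower_pow by lra. rewrite <- Rpower_plus. f_equal. rewrite mult_INR. simpl. ring. }
  assert (Hzz : (z / 2) ^ (2 * k) * 4 ^ k = z ^ (2 * k)).
  { rewrite pow_mult. replace 4 with (2 ^ 2) by ring. rewrite <- pow_mult, <- pow_mult.
    rewrite <- Rpow_mult_distr. f_equal. field. }
  set (A := Rpower (z / 2) (2 * INR k + nu)).
  assert (HA : 0 < A) by apply Rpower_pos.
  apply Rle_trans with (A / D0).
  - unfold Rdiv. apply Rmult_le_compat_l. lra. apply Rinv_le_contravar; auto.
  - unfold A, D0. rewrite Hpz. unfold ee. fold ps.
    set (pz := Rpower (z / 2) nu). set (g := Gamma (1 / 2)).
    right. rewrite <- Hzz. field. unfold g. repeat split; lra.
Qed.

Lemma Bessel_bound1 z : 0 < z ->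
  BesselI nu z <= (2 / Gamma (1/2)) * Rpower (z / 2) nu * (2 * Rpower (1 + z) gam * exp z).
Proof.
  intros Hz.
  set (P := Rpower (1 + z) gam). set (Q := Rpower (1 + z) (gam - 1)).
  assert (HP : 0 < P) by apply Rpower_pos. assert (HQ : 0 < Q) by apply Rpower_pos.
  assert (HPQ : Q * (1 + z) = P).
  { unfold P, Q. replace gam with ((gam - 1) + 1) at 2 by ring. rewrite Rpower_plus, Rpower_1; lra. }
  set (aa := fun n => ee z n * (P + (1 + INR n / 2) * Q)).
  assert (Haa : forall n, 0 <= aa n).
  { intro n. unfold aa. apply Rmult_le_pos. apply ee_nn; lra. pose proof (pos_INR n). nra. }
  assert (Hsum : forall N, sum_f_R0 aa N = (P + Q) * sum_f_R0 (ee z) N + Q / 2 * sum_f_R0 (fun n => INR n * ee z n) N).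
  { induction N. simpl. unfold aa. simpl. field. rewrite !tech5, IHN. unfold aa. field. }
  assert (Hbd : forall N, sum_f_R0 aa N <= (P + Q) * exp z + Q / 2 * (z * exp z)).
  { intro N. rewrite Hsum. pose proof (sum_ee z N ltac:(lra)). pose proof (sum_nee_le z N ltac:(lra)).
    apply Rplus_le_compat; apply Rmult_le_compat_l; try lra. }
  destruct (even_series aa _ Haa Hbd) as [Hex Hle].
  set (C0 := 2 / Gamma (1/2) * Rpower (z / 2) nu).
  assert (HC0 : 0 < C0).
  { unfold C0. pose proof (Gamma_pos (1/2) ltac:(lra)). pose proof (Rpower_pos (z/2) nu).
    apply Rmult_lt_0_compat; auto. unfold Rdiv. apply Rmult_lt_0_compat; [lra| apply Rinv_0_lt_compat; auto]. }
  unfold BesselI.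
  apply Rle_trans with (Series (fun k => C0 * aa (2 * k)%nat)).
  - apply Series_le.
    + intro k. split.
      * pose proof (INR_fact_lt_0 k). assert (0 < Gamma (INR k + nu + 1)) by (apply Gamma_pos; pose proof (pos_INR k); lra).
        pose proof (Rpower_pos (z / 2) (2 * INR k + nu)). unfold Rdiv. apply Rmult_le_pos. lra.
        left. apply Rinv_0_lt_compat. nra.
      * eapply Rle_trans. apply term_bound; auto. fold C0. apply Rmult_le_compat_l. lra.
        unfold aa. apply Rmult_le_compat_l. apply ee_nn; lra.
        eapply Rle_trans. apply (Rpower_split _ (1 + z)). pose proof (pos_INR k); lra. lra. unfold gam; lra.
        fold P Q. rewrite mult_INR. replace (INR 2 * INR k / 2) with (INR k) by (simpl; field).
        apply Rplus_le_compat_l. apply Rmult_le_compat_r. lra. lra.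
    + apply (ex_series_scal_l (K:=R_AbsRing) (V:=R_NormedModule) C0 _ Hex).
  - rewrite Series_scal_l. apply Rle_trans with (C0 * ((P + Q) * exp z + Q / 2 * (z * exp z))).
    + apply Rmult_le_compat_l; lra.
    + fold C0. apply Rmult_le_compat_l. lra. pose proof (exp_pos z).
      rewrite <- HPQ. assert (0 <= Q * exp z * z) by (apply Rmult_le_pos; [nra|lra]). nra.
Qed.

Lemma Bessel_bound2 z : 0 < z ->
  BesselI nu z <= (16 / Gamma (1/2)) * exp z * (Rpower z nu + Rpower z (-1/2)).
Proof.
  intros Hz. eapply Rle_trans; [apply Bessel_bound1; auto|].
  assert (Hg := Gamma_pos (1/2) ltac:(lra)).
  assert (Ha : Rpower (z / 2) nu <= 2 * Rpower z nu).
  { unfold Rdiv. rewrite <- Rpower_mult_distr by lra.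
    rewrite (Rmult_comm 2). apply Rmult_le_compat_l. left; apply Rpower_pos.
    unfold Rpower at 1. rewrite ln_Rinv by lra.
    assert (0 < ln 2) by (rewrite <- ln_1; apply ln_increasing; lra).
    assert (exp (nu * - ln 2) <= exp (ln 2)) by (apply exp_mono; nra).
    rewrite exp_ln in H0 by lra. lra. }
  assert (Hb : Rpower (1 + z) gam <= 2 * (1 + Rpower z gam)).
  { pose proof (Rpower_pos z gam).
    destruct (Rle_lt_dec z 1).
    - apply Rle_trans with (Rpower 2 gam). apply Rle_Rpower_l; unfold gam; lra.
      apply Rle_trans with (Rpower 2 1). apply Rle_Rpower; unfold gam; lra. rewrite Rpower_1; lra.
    - apply Rle_trans with (Rpower (2 * z) gam). apply Rle_Rpower_l; unfold gam; lra.
      rewrite <- Rpower_mult_distr by lra.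
      assert (Rpower 2 gam <= 2).
      { apply Rle_trans with (Rpower 2 1). apply Rle_Rpower; unfold gam; lra. rewrite Rpower_1; lra. }
      nra. }
  assert (Hc : Rpower z nu * Rpower z gam = Rpower z (-1/2)).
  { rewrite <- Rpower_plus. f_equal. unfold gam. field. }
  pose proof (exp_pos z). pose proof (Rpower_pos z nu). pose proof (Rpower_pos (z/2) nu).
  pose proof (Rpower_pos (1+z) gam). pose proof (Rpower_pos z gam).
  set (g := Gamma (1/2)) in *.
  set (A := Rpower (z / 2) nu) in *. set (B := Rpower (1 + z) gam) in *.
  set (Z := Rpower z nu) in *. set (Zg := Rpower z gam) in *.
  rewrite <- Hc.
  assert (2 / g * A * (2 * B * exp z) <= 2 / g * (2 * Z) * (2 * (2 * (1 + Zg)) * exp z)).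
  { assert (0 < 2 / g) by (unfold Rdiv; apply Rmult_lt_0_compat; [lra| apply Rinv_0_lt_compat; auto]).
    apply Rmult_le_compat; try nra. }
  eapply Rle_trans; [exact H4|]. right. field. lra.
Qed.
End Bessel.

Lemma ub_gauss b u : 0 < b < 1 -> 0 < u -> Rpower u b * exp (- u / 32) <= 32.
Proof.
  intros Hb Hu.
  assert (H1 : Rpower u b <= 1 + u).
  { destruct (Rle_lt_dec u 1).
    - assert (Rpower u b <= Rpower 1 b) by (apply Rle_Rpower_l; lra). rewrite Rpower_1_l in H. lra.
    - assert (Rpower u b <= Rpower u 1) by (apply Rle_Rpower; lra). rewrite Rpower_1 in H; lra. }
  pose proof (exp_ineq1_le (u / 32)).
  pose proof (exp_pos (- u / 32)). pose proof (exp_pos (u / 32)).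
  assert (E : exp (u / 32) * exp (- u / 32) = 1) by (rewrite <- exp_plus; replace (u / 32 + - u / 32) with 0 by field; apply exp_0).
  apply Rle_trans with ((1 + u) * exp (- u / 32)). apply Rmult_le_compat_r; lra.
  apply Rle_trans with (32 * exp (u / 32) * exp (- u / 32)).
  apply Rmult_le_compat_r; lra. rewrite Rmult_assoc, E. lra.
Qed.

Lemma Rpower_ln b e : 0 < b -> Rpower b e = exp (e * ln b).
Proof. reflexivity. Qed.

Lemma inv_ln b : 0 < b -> / b = exp (- ln b).
Proof. intros. rewrite exp_Ropp, exp_ln; auto. Qed.

Section Pure.
Variable nu : R.
Hypothesis hnu1 : -1 < nu.
Hypothesis hnu2 : nu < -1/2.
Let gam := -1/2 - nu.

Lemma pure_bound t x y : 0 < t -> 0 < x -> 0 < y ->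
  Rpower t (- (1 + nu)) * Rpower (x * y) (1/2 + nu) * exp (- (x - y) ^ 2 / (8 * t)) <=
  32 * ( / sqrt t * exp (- (x - y) ^ 2 / (8 * t))
       + / x * Rpower (x / y) gam * chi (Rlt_dec y (x / 2))
       + / y * Rpower (y / x) gam * chi (Rle_dec (x / 2) y) ).
Proof.
  intros Ht Hx Hy.
  set (G := exp (- (x - y) ^ 2 / (8 * t))).
  assert (HG : 0 < G) by apply exp_pos.
  set (lx := ln x). set (ly := ln y). set (lt := ln t).
  assert (HT : Rpower t (- (1 + nu)) * Rpower (x * y) (1/2 + nu) = exp (- (1 + nu) * lt + (1/2 + nu) * (lx + ly))).
  { rewrite !Rpower_ln by nra. rewrite ln_mult by lra. rewrite <- exp_plus. reflexivity. }
  assert (HR1 : / x * Rpower (x / y) gam = exp (- lx + gam * (lx - ly))).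
  { rewrite inv_ln, Rpower_ln by (try apply Rdiv_lt_0_compat; lra). unfold Rdiv. rewrite ln_mult, ln_Rinv by (try apply Rinv_0_lt_compat; lra).
    rewrite <- exp_plus. reflexivity. }
  assert (HR2 : / y * Rpower (y / x) gam = exp (- ly + gam * (ly - lx))).
  { rewrite inv_ln, Rpower_ln by (try apply Rdiv_lt_0_compat; lra). unfold Rdiv. rewrite ln_mult, ln_Rinv by (try apply Rinv_0_lt_compat; lra).
    rewrite <- exp_plus. reflexivity. }
  assert (HS : / sqrt t = exp (- (/ 2) * lt)).
  { rewrite <- Rpower_sqrt by lra. rewrite <- Rpower_Ropp. reflexivity. }
  assert (Hb : 0 < 1 + nu < 1) by lra.
  rewrite HT, HR1, HR2, HS.
  set (R1 := exp (- lx + gam * (lx - ly))). set (R2 := exp (- ly + gam * (ly - lx))).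
  set (Ts := exp (- (/ 2) * lt)).
  assert (HR1p : 0 < R1) by apply exp_pos. assert (HR2p : 0 < R2) by apply exp_pos.
  assert (HTs : 0 < Ts) by apply exp_pos.
  set (T := exp (- (1 + nu) * lt + (1 / 2 + nu) * (lx + ly))).
  assert (HTp : 0 < T) by apply exp_pos.
  unfold chi. destruct (Rlt_dec y (x / 2)) as [Hc1|Hc1]; destruct (Rle_dec (x / 2) y) as [Hc2|Hc2]; try lra.
  -
    set (u := x * x / t). assert (Hu : 0 < u) by (unfold u; apply Rdiv_lt_0_compat; nra).
    assert (E1 : T = Rpower u (1 + nu) * R1).
    { unfold T, R1, u. rewrite Rpower_ln by auto. unfold Rdiv. rewrite !ln_mult, ln_Rinv by (try apply Rinv_0_lt_compat; nra).
      rewrite <- exp_plus. f_equal. fold lx lt. unfold gam. field. }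
    assert (E2 : G <= exp (- u / 32)).
    { unfold G, u. apply exp_mono. unfold Rdiv. rewrite !Ropp_mult_distr_l.
      apply (Rmult_le_reg_r (32 * t)). nra. field_simplify; try lra. nra. }
    pose proof (ub_gauss (1 + nu) u Hb Hu).
    rewrite E1.
    apply Rle_trans with (R1 * (Rpower u (1 + nu) * exp (- u / 32))).
    { rewrite (Rmult_comm (Rpower u (1 + nu)) R1), Rmult_assoc. apply Rmult_le_compat_l. lra.
      apply Rmult_le_compat_l. left; apply Rpower_pos. auto. }
    nra.
  -
    destruct (Rle_lt_dec (2 * x) y) as [Hd|Hd].
    + set (u := y * y / t). assert (Hu : 0 < u) by (unfold u; apply Rdiv_lt_0_compat; nra).
      assert (E1 : T = Rpower u (1 + nu) * R2).
      { unfold T, R2, u. rewrite Rpower_ln by auto. unfold Rdiv. rewrite !ln_mult, ln_Rinv by (try apply Rinv_0_lt_compat; nra).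
        rewrite <- exp_plus. f_equal. fold ly lt. unfold gam. field. }
      assert (E2 : G <= exp (- u / 32)).
      { unfold G, u. apply exp_mono. unfold Rdiv. rewrite !Ropp_mult_distr_l.
        apply (Rmult_le_reg_r (32 * t)). nra. field_simplify; try lra. nra. }
      pose proof (ub_gauss (1 + nu) u Hb Hu).
      rewrite E1.
      apply Rle_trans with (R2 * (Rpower u (1 + nu) * exp (- u / 32))).
      { rewrite (Rmult_comm (Rpower u (1 + nu)) R2), Rmult_assoc. apply Rmult_le_compat_l. lra.
        apply Rmult_le_compat_l. left; apply Rpower_pos. auto. }
      nra.
    + destruct (Rle_lt_dec (y * y) t) as [He|He].
      * set (u := y * y / t). assert (Hu : 0 < u) by (unfold u; apply Rdiv_lt_0_compat; nra).
        assert (E1 : T = Rpower u (1 + nu) * R2).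
        { unfold T, R2, u. rewrite Rpower_ln by auto. unfold Rdiv. rewrite !ln_mult, ln_Rinv by (try apply Rinv_0_lt_compat; nra).
          rewrite <- exp_plus. f_equal. fold ly lt. unfold gam. field. }
        assert (Hu1 : u <= 1) by (unfold u; apply (Rmult_le_reg_r t); auto; unfold Rdiv; rewrite Rmult_assoc, Rinv_l; lra).
        assert (Rpower u (1 + nu) <= 1) by (apply Rle_trans with (Rpower 1 (1 + nu)); [apply Rle_Rpower_l; lra| rewrite Rpower_1_l; lra]).
        assert (G <= 1).
        { unfold G; rewrite <- exp_0; apply exp_mono.
          replace (- (x - y) ^ 2 / (8 * t)) with (- ((x - y) ^ 2 / (8 * t))) by (field; lra).
          assert (0 <= (x - y) ^ 2 / (8 * t)) by (apply Rdiv_le_0_compat; [apply pow2_ge_0| lra]). lra. }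
        rewrite E1. pose proof (Rpower_pos u (1 + nu)). nra.
      * assert (Hxy : t / 2 <= x * y) by nra.
        assert (E1 : Rpower (x * y) (1/2 + nu) <= Rpower (t / 2) (1/2 + nu)).
        { apply Rpower_le_neg; lra. }
        assert (E2 : Rpower (t / 2) (1/2 + nu) <= 2 * Rpower t (1/2 + nu)).
        { unfold Rdiv. rewrite <- Rpower_mult_distr by lra.
          rewrite (Rmult_comm (Rpower t _)). apply Rmult_le_compat_r. left; apply Rpower_pos.
          rewrite Rpower_ln by lra. rewrite ln_Rinv by lra.
          assert (0 < ln 2) by (rewrite <- ln_1; apply ln_increasing; lra).
          assert (exp ((1/2 + nu) * - ln 2) <= exp (ln 2)) by (apply exp_mono; nra).
          rewrite exp_ln in H0 by lra. lra. }
        assert (E3 : Rpower t (- (1 + nu)) * Rpower t (1/2 + nu) = Ts).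
        { unfold Ts. rewrite !Rpower_ln by lra. rewrite <- exp_plus. f_equal. fold lt. field. }
        assert (E4 : T <= 2 * Ts).
        { unfold T. rewrite <- HT, <- E3. pose proof (Rpower_pos t (- (1 + nu))).
          apply Rle_trans with (Rpower t (- (1 + nu)) * (2 * Rpower t (1 / 2 + nu))).
          apply Rmult_le_compat_l; lra. lra. }
        nra.
Qed.
End Pure.

Lemma chi_nn {P : Prop} (d : {P} + {~ P}) : 0 <= chi d.
Proof. unfold chi; destruct d; lra. Qed.

Lemma Rpower_inv t e : 0 < t -> Rpower (/ t) e = Rpower t (- e).
Proof. intros. unfold Rpower. rewrite ln_Rinv by auto. f_equal. ring. Qed.

Theorem lemma3p2 (nu : R) (hnu1 : -1 < nu) (hnu2 : nu < -1/2) :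
  let gam := -1/2 - nu in
  exists C c : R, 0 < C /\ 0 < c /\
    forall t x y : R, 0 < t -> 0 < x -> 0 < y ->
      laguerre_heat_kernel nu t x y <=
      C * ( / sqrt t * exp (- (Rabs (x - y)) ^ 2 / (c * t))
          + / x * Rpower (x / y) gam * chi (Rlt_dec y (x / 2))
          + / y * Rpower (y / x) gam * chi (Rle_dec (x / 2) y) ).
Proof.
  intros gam.
  assert (Hg := Gamma_pos (1/2) ltac:(lra)).
  set (K := 16 / Gamma (1/2)).
  assert (HK : 0 < K) by (unfold K, Rdiv; apply Rmult_lt_0_compat; [lra| apply Rinv_0_lt_compat; auto]).
  exists (K * 33), 8. split; [lra|]. split; [lra|].
  intros t x y Ht Hx Hy.
  rewrite pow2_abs.
  unfold laguerre_heat_kernel. cbv zeta.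
  set (r := exp (-4 * t)).
  set (w := exp (-2 * t)).
  assert (Hw : 0 < w) by apply exp_pos.
  assert (Hrw : r = w * w) by (unfold r, w; rewrite <- exp_plus; f_equal; ring).
  assert (Hsw : sqrt r = w) by (rewrite Hrw; apply sqrt_square; lra).
  assert (HE2 : w * exp (2 * t) = 1) by (unfold w; rewrite <- exp_plus; replace (-2 * t + 2 * t) with 0 by ring; apply exp_0).
  assert (HE2b : 1 + 2 * t <= exp (2 * t)) by apply exp_ineq1_le.
  assert (Hw1 : w < 1) by (pose proof (exp_pos (2 * t)); nra).
  assert (Hr : 0 < r < 1) by (rewrite Hrw; nra).
  assert (Hs : 0 < 1 - r) by lra.
  rewrite Hsw.
  set (m := 2 * w / (1 - r)).
  assert (Hm : 0 < m) by (unfold m, Rdiv; apply Rmult_lt_0_compat; [lra| apply Rinv_0_lt_compat; lra]).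
  set (X := x * y). assert (HX : 0 < X) by (unfold X; nra).
  assert (Hz : m * x * y = m * X) by (unfold X; ring).
  rewrite Hz.
  set (z := m * X). assert (Hzp : 0 < z) by (unfold z; nra).
  assert (F1 : 2 * sqrt (r * x * y) / (1 - r) = m * sqrt X).
  { replace (r * x * y) with (r * X) by (unfold X; ring). rewrite sqrt_mult by lra. rewrite Hsw.
    unfold m. field. lra. }
  rewrite F1.
  assert (F3 : m <= / t).
  { unfold m. apply (Rmult_le_reg_r (t * (1 - r))). nra.
    replace (2 * w / (1 - r) * (t * (1 - r))) with (2 * w * t) by (field; lra).
    replace (/ t * (t * (1 - r))) with (1 - r) by (field; lra).
    assert (H4 : r * (1 + 4 * t) <= 1).
    { rewrite Hrw. assert (exp (2 * t) * exp (2 * t) >= 1 + 4 * t) by nra.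
      assert (w * w * (exp (2 * t) * exp (2 * t)) = 1) by (replace (w * w * (exp (2 * t) * exp (2 * t))) with ((w * exp (2 * t)) * (w * exp (2 * t))) by ring; rewrite HE2; ring).
      nra. }
    assert (H5 : w * (1 + 4 * t) <= 2) by nra.
    nra. }
  set (G := exp (- (x - y) ^ 2 / (8 * t))).
  assert (HG : 0 < G) by apply exp_pos.
  assert (F2 : exp (- (1 / 2) * ((1 + r) / (1 - r)) * (x ^ 2 + y ^ 2)) * exp z <= G).
  { rewrite <- exp_plus. apply exp_mono.
    set (a := (1 + r) / (2 * (1 - r))).
    set (D := (x - y) ^ 2). assert (HD : 0 <= D) by apply pow2_ge_0.
    assert (Ha : / (8 * t) <= a).
    { unfold a. apply Rle_trans with (/ (2 * (1 - r))).
      - apply Rinv_le_contravar. lra. pose proof (exp_ineq1_le (-4 * t)). fold r in H. lra.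
      - unfold Rdiv. rewrite <- (Rmult_1_l (/ (2 * (1 - r)))) at 1. apply Rmult_le_compat_r.
        left; apply Rinv_0_lt_compat; lra. lra. }
    assert (Eq : - (1 / 2) * ((1 + r) / (1 - r)) * (x ^ 2 + y ^ 2) + z = - a * D - (1 - w) ^ 2 * X / (1 - r)).
    { unfold a, D, z, m, X. rewrite Hrw. field. lra. }
    rewrite Eq.
    assert (0 <= (1 - w) ^ 2 * X / (1 - r)) by (apply Rdiv_le_0_compat; [apply Rmult_le_pos; [apply pow2_ge_0| lra]| lra]).
    replace (- (x - y) ^ 2 / (8 * t)) with (- (D * / (8 * t))) by (unfold D; field; lra).
    assert (0 <= (a - / (8 * t)) * D) by (apply Rmult_le_pos; lra). nra. }
  assert (F4 := Bessel_bound2 nu hnu1 hnu2 z Hzp). fold K in F4.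
  assert (F5 : m * sqrt X * Rpower z nu = Rpower m (1 + nu) * Rpower X (1/2 + nu)).
  { rewrite <- Rpower_sqrt by lra. unfold z. unfold Rpower. rewrite ln_mult by lra.
    rewrite <- (exp_ln m) at 1 by lra. rewrite <- !exp_plus. f_equal. field. }
  assert (F6 : m * sqrt X * Rpower z (-1/2) = Rpower m (1/2)).
  { rewrite <- Rpower_sqrt by lra. unfold z. unfold Rpower. rewrite ln_mult by lra.
    rewrite <- (exp_ln m) at 1 by lra. rewrite <- !exp_plus. f_equal. field. }
  assert (F7 : Rpower m (1 + nu) <= Rpower t (- (1 + nu))).
  { rewrite <- Rpower_inv by lra. apply Rle_Rpower_l; lra. }
  assert (F8 : Rpower m (1/2) <= / sqrt t).
  { replace (1/2) with (/2) by field. rewrite <- Rpower_sqrt by lra. rewrite <- Rpower_Ropp. rewrite <- Rpower_inv by lra.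
    apply Rle_Rpower_l; lra. }
  assert (PB := pure_bound nu hnu1 hnu2 t x y Ht Hx Hy). fold gam G in PB.
  fold X in PB.
  set (E := exp (- (1 / 2) * ((1 + r) / (1 - r)) * (x ^ 2 + y ^ 2))) in *.
  assert (HE : 0 < E) by apply exp_pos.
  set (I := BesselI nu z) in *.
  set (S1 := / x * Rpower (x / y) gam * chi (Rlt_dec y (x / 2))).
  set (S2 := / y * Rpower (y / x) gam * chi (Rle_dec (x / 2) y)).
  assert (HS1 : 0 <= S1) by (unfold S1; apply Rmult_le_pos; [apply Rmult_le_pos; [left; apply Rinv_0_lt_compat; lra| left; apply Rpower_pos]| apply chi_nn]).
  assert (HS2 : 0 <= S2) by (unfold S2; apply Rmult_le_pos; [apply Rmult_le_pos; [left; apply Rinv_0_lt_compat; lra| left; apply Rpower_pos]| apply chi_nn]).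
  assert (Hst : 0 < / sqrt t) by (apply Rinv_0_lt_compat, sqrt_lt_R0; lra).
  pose proof (exp_pos z) as Hez.
  pose proof (Rpower_pos z nu). pose proof (Rpower_pos z (-1/2)).
  pose proof (Rpower_pos m (1 + nu)). pose proof (Rpower_pos X (1/2 + nu)). pose proof (Rpower_pos t (- (1 + nu))).
  assert (HsX : 0 < sqrt X) by (apply sqrt_lt_R0; lra).
  set (T := Rpower t (- (1 + nu)) * Rpower X (1 / 2 + nu)).
  apply Rle_trans with (m * sqrt X * E * (K * exp z * (Rpower z nu + Rpower z (-1/2)))).
  { apply Rmult_le_compat_l. 2: exact F4. apply Rmult_le_pos; [apply Rmult_le_pos|]; lra. }
  replace (m * sqrt X * E * (K * exp z * (Rpower z nu + Rpower z (-1/2))))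
    with (K * (E * exp z) * (m * sqrt X * Rpower z nu + m * sqrt X * Rpower z (-1/2))) by ring.
  rewrite F5, F6.
  apply Rle_trans with (K * G * (T + / sqrt t)).
  { apply Rmult_le_compat.
    apply Rmult_le_pos; [lra| apply Rmult_le_pos; lra].
    apply Rplus_le_le_0_compat; [apply Rmult_le_pos|]; left; apply Rpower_pos.
    apply Rmult_le_compat_l; lra.
    apply Rplus_le_compat. unfold T. apply Rmult_le_compat_r; lra. exact F8. }
  assert (PB' : T * G <= 32 * (/ sqrt t * G + S1 + S2)) by (unfold T; exact PB).
  assert (0 <= / sqrt t * G) by nra.
  replace (K * G * (T + / sqrt t)) with (K * (T * G + / sqrt t * G)) by ring.
  replace (K * 33 * (/ sqrt t * G + S1 + S2)) with (K * (33 * (/ sqrt t * G + S1 + S2))) by ring.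
  apply Rmult_le_compat_l; lra.
Qed.
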